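(* Let $n\ge1$ and let $J\subset S$ be a homogeneous ideal. Suppose that for some $m>0$, $J_m$ is nonzero and spanned by an initial segment of degree-$m$ monomials with respect to the degree reverse lexicographic order. If $J_{m'}\neq0$ for some $m'<m$ (i.e. $J$ is not generated in degrees $\ge m$), then the Hilbert polynomial of $S/J$ is constant.
   Context: $S=k[x_0,\dots,x_n]=\bigoplus_m S_m$ over an algebraically closed field $k$ of characteristic zero. The degree reverse lexicographic order with $x_0\succ\cdots\succ x_n$: for monomials of the same degree, $x^\alpha\succ x^\beta$ iff the last nonzero entry of $\alpha-\beta$ is negative. An initial segment of degree $t$ is the set of the first $\ell$ monomials of degree $t$ in this order, for some $\ell$. *)

(* Defs.v *)
From HB Require Import structures.
From mathcomp Require Import all_boot all_order all_algebra.
Set Implicit Arguments. Unset Strict Implicit. Unset Printing Implicit Defensive.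
Import Order.TTheory GRing.Theory Num.Theory.
Local Open Scope ring_scope.

(* Monomials of S = k[x_0,...,x_n]: exponent vectors (alpha_0,...,alpha_n). *)
Definition mon (n : nat) := n.+1.-tuple nat.
Definition mdeg (n : nat) (a : mon n) : nat := sumn a.

(* Elements of S: coefficient functions with finite support. *)
Definition spoly (k : fieldType) (n : nat) := mon n -> k.
Definition finsupp (k : fieldType) n (f : spoly k n) : Prop :=
  exists s : seq (mon n), forall a, f a != 0 -> a \in s.
Definition padd (k : fieldType) n (f g : spoly k n) : spoly k n := fun a => f a + g a.
Definition pscale (k : fieldType) n (c : k) (f : spoly k n) : spoly k n := fun a => c * f a.
Definition pzero (k : fieldType) n : spoly k n := fun _ => 0.
Definition xm (k : fieldType) n (a : mon n) : spoly k n :=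
  fun b => if b == a then 1 else 0.
Definition mdec n (a : mon n) (i : 'I_n.+1) : mon n :=
  [tuple (tnth a j - (j == i))%N | j < n.+1].
(* multiplication by the variable x_i *)
Definition mulx (k : fieldType) n (i : 'I_n.+1) (f : spoly k n) : spoly k n :=
  fun a => if (0 < tnth a i)%N then f (mdec a i) else 0.
Definition hcomp (k : fieldType) n (d : nat) (f : spoly k n) : spoly k n :=
  fun a => if mdeg a == d then f a else 0.
(* f is homogeneous of degree d (f = 0 allowed) *)
Definition homog (k : fieldType) n (d : nat) (f : spoly k n) : Prop :=
  forall a, f a != 0 -> mdeg a = d.

(* J (a predicate on S) is a homogeneous ideal of S: a k-subspace of S,
   closed under multiplication by the variables (hence by all of S),
   and containing the homogeneous components of its elements. *)
Definition homog_ideal (k : fieldType) n (J : spoly k n -> Prop) : Prop :=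
  (forall f, J f -> finsupp f) /\
  J (@pzero k n) /\
  (forall f g, J f -> J g -> J (padd f g)) /\
  (forall c f, J f -> J (pscale c f)) /\
  (forall i f, J f -> J (mulx i f)) /\
  (forall d f, J f -> J (hcomp d f)).

(* degree reverse lexicographic order on monomials of the same degree:
   a >- b iff the last nonzero entry of a - b is negative *)
Definition revlex_gt n (a b : mon n) : bool :=
  [exists i : 'I_n.+1, (tnth a i < tnth b i)%N &&
     [forall j : 'I_n.+1, (i < j)%N ==> (tnth a j == tnth b j)]].

Definition mond (n d : nat) :=
  {t : n.+1.-tuple 'I_d.+1 | sumn (map (@nat_of_ord _) t) == d}.
Definition mon_of n d (m : mond n d) : mon n := map_tuple (@nat_of_ord _) (val m).

(* a lies among the first l monomials of degree m in degrevlex order *)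
Definition in_init_seg n (m l : nat) (a : mon n) : bool :=
  (mdeg a == m) &&
  (#|[pred b : mond n m | revlex_gt (mon_of b) a]| < l)%N.

(* S_d identified with {ffun mond n d -> k}; embedding into S *)
Definition emb (k : fieldType) n d (v : {ffun mond n d -> k^o}) : spoly k n :=
  fun a => \sum_(b : mond n d) v b * xm k (mon_of b) a.

(* dim_k (S/J)_d = c *)
Definition hilb_fun_is (k : fieldType) n (J : spoly k n -> Prop) (d c : nat) : Prop :=
  exists V : {vspace {ffun mond n d -> k^o}},
    (forall v, v \in V <-> J (emb v)) /\ (#|{: mond n d}| - \dim V)%N = c.

Definition hilb_poly_is (k : fieldType) n (J : spoly k n -> Prop) (P : {poly rat}) : Prop :=
  exists d0, forall d, (d0 <= d)%N -> exists c, hilb_fun_is J d c /\ P.[d%:R] = c%:R.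

(* Main.v *)
Require Import Defs.
From HB Require Import structures.
From mathcomp Require Import all_boot all_order all_algebra.
From mathcomp Require Import zify.
From Stdlib Require Import FunctionalExtensionality Classical ClassicalEpsilon.
Set Implicit Arguments. Unset Strict Implicit. Unset Printing Implicit Defensive.
Import Order.TTheory GRing.Theory Num.Theory.
Local Open Scope ring_scope.
Definition inc n (a : mon n) (i : 'I_n.+1) : mon n :=
  [tuple (tnth a j + (j == i))%N | j < n.+1].

Lemma tnth_inc n (a : mon n) i j : tnth (inc a i) j = (tnth a j + (j == i))%N.
Proof. by rewrite tnth_mktuple. Qed.
Lemma tnth_mdec n (a : mon n) i j : tnth (mdec a i) j = (tnth a j - (j == i))%N.
Proof. by rewrite tnth_mktuple. Qed.
Lemma mdecK n (a : mon n) i : mdec (inc a i) i = a.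
Proof. apply: eq_from_tnth => j; rewrite tnth_mdec tnth_inc; lia. Qed.
Lemma incK n (a : mon n) i : (0 < tnth a i)%N -> inc (mdec a i) i = a.
Proof. move=> h; apply: eq_from_tnth => j; rewrite tnth_inc tnth_mdec.
case: eqP => [->|]; lia. Qed.
Lemma mdegE n (a : mon n) : mdeg a = (\sum_(j < n.+1) tnth a j)%N.
Proof. by rewrite /mdeg sumnE big_tuple. Qed.
Lemma mdeg_inc n (a : mon n) i : mdeg (inc a i) = (mdeg a).+1.
Proof. rewrite !mdegE (bigD1 i) //= [in RHS](bigD1 i) //= tnth_inc eqxx.
rewrite addn1 addSn; congr (_.+1)%N; congr (_ + _)%N; apply: eq_bigr => j /negbTE hj.
by rewrite tnth_inc hj addn0. Qed.
Lemma inc_pos n (a : mon n) i : (0 < tnth (inc a i) i)%N.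
Proof. by rewrite tnth_inc eqxx addn1. Qed.

Lemma mulx_inc (k : fieldType) n (i : 'I_n.+1) (f : spoly k n) a :
  mulx i f (inc a i) = f a.
Proof. by rewrite /mulx inc_pos mdecK. Qed.

Lemma mulx_xm (k : fieldType) n (i : 'I_n.+1) a :
  mulx i (xm k a) = xm k (inc a i).
Proof.
apply: functional_extensionality => b; rewrite /mulx /xm.
case: ifP => hb.
  case: (eqVneq (mdec b i) a) => [<-|hne]; first by rewrite incK // eqxx.
  case: eqP => // hbe; by rewrite hbe mdecK eqxx in hne.
case: eqP => // hbe; by rewrite hbe inc_pos in hb.
Qed.

Lemma revlex_trans n (a b c : mon n) :
  revlex_gt a b -> revlex_gt b c -> revlex_gt a c.
Proof.
move=> /existsP [i /andP [hi /forallP hfi]] /existsP [i' /andP [hi' /forallP hfi']].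
apply/existsP.
case: (ltngtP i i') => hii.
- exists i'; apply/andP; split.
    by have := hfi i'; rewrite hii /= => /eqP ->.
  apply/forallP => j; apply/implyP => hj.
  have := hfi j; have := hfi' j; rewrite hj /=.
  have -> : (i < j)%N by lia.
  by move=> /eqP -> /eqP ->.
- exists i; apply/andP; split.
    by have := hfi' i; rewrite hii /= => /eqP <-.
  apply/forallP => j; apply/implyP => hj.
  have := hfi j; have := hfi' j; rewrite hj /=.
  have -> : (i' < j)%N by lia.
  by move=> /eqP -> /eqP ->.
- have hii' : i = i' by apply: val_inj.
  subst i'; exists i; apply/andP; split; first exact: ltn_trans hi hi'.
  apply/forallP => j; apply/implyP => hj.
  have := hfi j; have := hfi' j; rewrite hj /=.
  by move=> /eqP -> /eqP ->.
Qed.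
Definition itinc n (t : nat) (a : mon n) := iter t (fun a => inc a ord_max) a.

Lemma itinc_deg n t (a : mon n) : mdeg (itinc t a) = (mdeg a + t)%N.
Proof. elim: t => [|t IH] /=; first by rewrite addn0. by rewrite mdeg_inc IH addnS. Qed.

Lemma itinc_last n t (a : mon n) : tnth (itinc t a) ord_max = (tnth a ord_max + t)%N.
Proof. elim: t => [|t IH] /=; first by rewrite addn0. by rewrite tnth_inc eqxx IH; lia. Qed.

Lemma top_m (k : fieldType) n (J : spoly k n -> Prop) (hJ : homog_ideal J) (m : nat)
  (hseg : exists l : nat, forall f : spoly k n, finsupp f -> homog m f ->
            (J f <-> forall a, f a != 0 -> in_init_seg m l a))
  (hlow : exists m' : nat, (m' < m)%N /\
            exists f, J f /\ homog m' f /\ exists a, f a != 0) :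
  forall c, mdeg c = m -> tnth c ord_max = 0%N -> J (xm k c).
Proof.
case: hseg => l hl; case: hlow => m' [hm' [g [Jg [hg [a0 ga0]]]]].
case: hJ => [hfs [h0 [hD [hZ [hX hH]]]]].
pose t := (m - m')%N.
pose h := iter t (mulx ord_max) g.
have Jh : J h.
  rewrite /h /t; elim: (m - m')%N => [|t' IH] //=; exact: hX.
have hv : h (itinc t a0) = g a0.
  rewrite /h /itinc /t; elim: (m - m')%N => [|t' IH] //=; by rewrite mulx_inc.
have ha0 : mdeg a0 = m' by apply: hg.
have ha1 : mdeg (itinc t a0) = m by rewrite itinc_deg ha0 /t; lia.
have Jh' : J (hcomp m h) by apply: hH.
have hin : in_init_seg m l (itinc t a0).
  apply: ((hl _ (hfs _ Jh') _).1 Jh').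
    by move=> a; rewrite /hcomp; case: ifP => [/eqP //|_]; rewrite eqxx.
  rewrite /hcomp ifT; first by rewrite hv.
  exact/eqP.
move=> c hc hcn.
apply: (hl _ _ _).2.
- by exists [:: c] => a; rewrite /xm inE; case: (a =P c) => // _; rewrite eqxx.
- by move=> a; rewrite /xm; case: (a =P c) => [-> _|_]; [exact: hc | rewrite eqxx].
move=> a; rewrite /xm; case: (a =P c) => [-> _|_]; last by rewrite eqxx.
rewrite /in_init_seg hc eqxx /=.
case/andP: hin => _ hlt; apply: leq_ltn_trans hlt.
apply: subset_leq_card; apply/subsetP => b; rewrite !inE => hb.
apply: revlex_trans hb _.
apply/existsP; exists ord_max; rewrite hcn itinc_last /t.
apply/andP; split; first by rewrite addn_gt0 subn_gt0 hm' orbT.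
by apply/forallP => j; apply/implyP => hj; rewrite ltnNge -ltnS ltn_ord in hj.
Qed.

Lemma top_D (k : fieldType) n (J : spoly k n -> Prop) (m : nat)
  (hX : forall i f, J f -> J (mulx i f))
  (htop : forall c, mdeg c = m -> tnth c ord_max = 0%N -> J (xm k c)) :
  forall D c, (m <= D)%N -> mdeg c = D -> tnth c ord_max = 0%N -> J (xm k c).
Proof.
move=> D c /subnKC <-; elim: (D - m)%N c => [|t IH] c.
  by rewrite addn0; apply: htop.
move=> hc hcn.
case: (pickP (fun i => 0 < tnth c i)%N) => [i hi|h0]; last first.
  have : mdeg c = 0%N by rewrite mdegE big1 // => j _; have := h0 j; lia.
  by rewrite hc addnS.
have hcK := incK hi.
rewrite -hcK -mulx_xm; apply: hX; apply: IH.
  by have := mdeg_inc (mdec c i) i; rewrite hcK hc addnS => -[].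
by rewrite tnth_mdec hcn.
Qed.

Lemma mon_of_inj n d : injective (@mon_of n d).
Proof.
move=> [a ha] [b hb]; rewrite /mon_of /= => h; apply: val_inj => /=.
apply: eq_from_tnth => j; apply: val_inj.
by have := congr1 (fun t => tnth t j) h; rewrite !tnth_map.
Qed.

Lemma mdeg_mon_of n d (b : mond n d) : mdeg (mon_of b) = d.
Proof. by case: b => t ht; apply/eqP. Qed.

Lemma mon_of_ex n d (x : mon n) : mdeg x = d -> exists b : mond n d, mon_of b = x.
Proof.
move=> hx.
have hle : forall j, (tnth x j < d.+1)%N.
  move=> j; rewrite ltnS -hx /mdeg sumnE big_tuple (bigD1 j) //=; lia.
pose t : n.+1.-tuple 'I_d.+1 := [tuple inord (tnth x j) | j < n.+1].
have ht : map_tuple (@nat_of_ord _) t = x.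
  by apply: eq_from_tnth => j; rewrite tnth_map tnth_mktuple inordK.
have hs : sumn (map (@nat_of_ord _) t) == d.
  by rewrite -[map _ _]/(tval (map_tuple (@nat_of_ord _) t)) ht -hx.
by exists (exist _ t hs).
Qed.

Lemma embE (k : fieldType) n d (v : {ffun mond n d -> k^o}) (b : mond n d) :
  emb v (mon_of b) = v b.
Proof.
rewrite /emb (bigD1 b) //= /xm eqxx mulr1 big1 ?addr0 // => c hc.
by rewrite (inj_eq (@mon_of_inj n d)) eq_sym (negbTE hc) mulr0.
Qed.

Lemma emb0 (k : fieldType) n d (v : {ffun mond n d -> k^o}) x :
  (forall b : mond n d, mon_of b != x) -> emb v x = 0.
Proof.
by move=> h; rewrite /emb big1 // => c _; rewrite /xm eq_sym (negbTE (h c)) mulr0.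
Qed.

Definition delta (k : fieldType) n d (b : mond n d) : {ffun mond n d -> k^o} :=
  [ffun c => (c == b)%:R].

Lemma emb_delta (k : fieldType) n d (b : mond n d) : emb (delta k b) = xm k (mon_of b).
Proof.
rewrite /emb /delta; apply: functional_extensionality => x.
rewrite (bigD1 b) //= ffunE eqxx mul1r big1 ?addr0 // => c hc.
by rewrite ffunE (negbTE hc) mul0r.
Qed.

Lemma ffun_delta (k : fieldType) n d (w : {ffun mond n d -> k^o}) :
  w = \sum_b w b *: delta k b.
Proof.
apply/ffunP => c; rewrite sum_ffunE (bigD1 c) //= !ffunE eqxx big1 ?addr0.
  by rewrite [_ *: _]mulr1.
by move=> b hb; rewrite !ffunE eq_sym (negbTE hb) [_ *: _]mulr0.
Qed.

Lemma vspace_of (K : fieldType) (vT : vectType K) (P : vT -> Prop) :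
  P 0 -> (forall u v, P u -> P v -> P (u + v)) -> (forall c u, P u -> P (c *: u)) ->
  exists U : {vspace vT}, forall v, v \in U <-> P v.
Proof.
move=> P0 PD PZ.
suff: forall t (U : {vspace vT}), (\dim {:vT} - \dim U < t)%N ->
  (forall v, v \in U -> P v) -> exists U : {vspace vT}, forall v, v \in U <-> P v.
  by move=> /(_ (\dim {:vT}).+1 0%VS); apply => //; [lia | move=> v /vlineP [c ->]; rewrite scaler0].
elim=> [//|t IH] U ht hU.
case: (classic (forall v, P v -> v \in U)) => [h|].
  by exists U => v; split; [apply: hU | apply: h].
move=> hn; have [v hv] := not_all_ex_not _ _ hn; have [Pv vU] := imply_to_and _ _ hv.
apply: (IH (U + <[v]>)%VS).
  have hS : (U <= U + <[v]>)%VS by apply: addvSl.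
  have := dimv_leqif_eq hS; case=> hle heq.
  have hne : (U == U + <[v]>)%VS = false.
    apply/negP => /eqP hE; apply: vU; rewrite hE; apply: (subvP (addvSr U _)); exact: memv_line.
  rewrite hne in heq.
  have hlt : (\dim U < \dim (U + <[v]>))%N by rewrite ltn_neqAle heq hle.
  have := dimvS (subvf (U + <[v]>)%VS); lia.
move=> w /memv_addP [u hu [y /vlineP [c ->] ->]].
by apply: PD; [apply: hU | apply: PZ].
Qed.

Lemma dimF (k : fieldType) (I : finType) : \dim (fullv : {vspace {ffun I -> k^o}}) = #|I|.
Proof. rewrite dimvf /dim /=. by rewrite muln1. Qed.

Definition phi (k : fieldType) n d (v : {ffun mond n d -> k^o}) : {ffun mond n d.+1 -> k^o} :=
  [ffun b => \sum_a v a * (mon_of b == inc (mon_of a) ord_max)%:R].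

Lemma phi_linear (k : fieldType) n d : linear (@phi k n d).
Proof.
move=> c u v; apply/ffunP => b; rewrite !ffunE /= scaler_sumr -big_split /=.
apply: eq_bigr => a _; rewrite !ffunE.
by rewrite mulrDl -scalerAl.
Qed.

HB.instance Definition _ (k : fieldType) n d :=
  GRing.isLinear.Build k {ffun mond n d -> k^o} {ffun mond n d.+1 -> k^o} _ (@phi k n d)
    (@phi_linear k n d).

Lemma inc_inj n (i : 'I_n.+1) : injective (fun a : mon n => inc a i).
Proof. by move=> a b h; rewrite -(mdecK a i) -(mdecK b i) /= h. Qed.

Lemma phi_at (k : fieldType) n d (v : {ffun mond n d -> k^o}) a b :
  mon_of b = inc (mon_of a) ord_max -> phi v b = v a.
Proof.
move=> hb; rewrite ffunE (bigD1 a) //= hb eqxx mulr1 big1 ?addr0 // => a' ha'.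
case: eqP => [h|_]; last by rewrite mulr0.
by move: ha'; rewrite (mon_of_inj (inc_inj h)) eqxx.
Qed.

Lemma phi_inj (k : fieldType) n d : injective (@phi k n d).
Proof.
move=> u v h; apply/ffunP => a.
have hdg : mdeg (inc (mon_of a) ord_max) = d.+1 by rewrite mdeg_inc mdeg_mon_of.
have [b hb] := mon_of_ex hdg.
by rewrite -(phi_at u hb) -(phi_at v hb) h.
Qed.

Lemma phi_delta (k : fieldType) n d (a : mond n d) (b : mond n d.+1) :
  mon_of b = inc (mon_of a) ord_max -> phi (delta k a) = delta k b.
Proof.
move=> hb; apply/ffunP => b'; rewrite ffunE (bigD1 a) //= !ffunE eqxx mul1r.
rewrite big1 ?addr0; last by move=> a' ha'; rewrite ffunE (negbTE ha') mul0r.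
by rewrite -hb (inj_eq (@mon_of_inj _ _)).
Qed.

Lemma emb_phi (k : fieldType) n d (v : {ffun mond n d -> k^o}) :
  emb (phi v) = mulx ord_max (emb v).
Proof.
apply: functional_extensionality => x.
case: (pickP (fun b : mond n d.+1 => mon_of b == x)) => [b /eqP hb|hnone].
  rewrite -hb embE /mulx.
  case: ifP => hpos.
    have hd : mdeg (mdec (mon_of b) ord_max) = d.
      by have := mdeg_inc (mdec (mon_of b) ord_max) ord_max; rewrite incK // mdeg_mon_of => -[].
    have [a ha] := mon_of_ex hd.
    by rewrite -ha embE (phi_at v (a:=a)) // ha incK.
  rewrite ffunE big1 // => a _; case: eqP => [h|]; last by rewrite mulr0.
  by rewrite h inc_pos in hpos.
rewrite emb0; last by move=> b; have := hnone b => /negbT.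
rewrite /mulx; case: ifP => // hpos.
case: (pickP (fun a : mond n d => mon_of a == mdec x ord_max)) => [a /eqP ha|hn2].
  have hdg : mdeg x = d.+1 by rewrite -(incK hpos) mdeg_inc -ha mdeg_mon_of.
  have [b hb] := mon_of_ex hdg.
  by have := hnone b; rewrite hb eqxx.
by rewrite emb0 // => a; have := hn2 a => /negbT.
Qed.

Lemma emb_zero (k : fieldType) n d : emb (0 : {ffun mond n d -> k^o}) = @pzero k n.
Proof. by apply: functional_extensionality => a; rewrite /emb big1 // => b _; rewrite ffunE mul0r. Qed.
Lemma embD (k : fieldType) n d (u v : {ffun mond n d -> k^o}) : emb (u + v) = padd (emb u) (emb v).
Proof.
apply: functional_extensionality => a; rewrite /emb /padd -big_split.
by apply: eq_bigr => b _; rewrite ffunE mulrDl.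
Qed.
Lemma embZ (k : fieldType) n d c (u : {ffun mond n d -> k^o}) : emb (c *: u) = pscale c (emb u).
Proof.
apply: functional_extensionality => a; rewrite /emb /pscale mulr_sumr.
by apply: eq_bigr => b _; rewrite ffunE mulrA.
Qed.

Lemma Vex (k : fieldType) n (J : spoly k n -> Prop) (hJ : homog_ideal J) d :
  exists U : {vspace {ffun mond n d -> k^o}}, forall v, v \in U <-> J (emb v).
Proof.
case: hJ => [hfs [h0 [hD [hZ [hX hH]]]]].
apply: vspace_of.
- by rewrite emb_zero.
- by move=> u v hu hv; rewrite embD; apply: hD.
- by move=> c u hu; rewrite embZ; apply: hZ.
Qed.

Lemma step (k : fieldType) n (J : spoly k n -> Prop) (hJ : homog_ideal J) m
  (htopD : forall D c, (m <= D)%N -> mdeg c = D -> tnth c ord_max = 0%N -> J (xm k c))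
  d (hd : (m <= d.+1)%N)
  (U1 : {vspace {ffun mond n d -> k^o}}) (U2 : {vspace {ffun mond n d.+1 -> k^o}})
  (h1 : forall v, v \in U1 <-> J (emb v)) (h2 : forall v, v \in U2 <-> J (emb v)) :
  (#|{: mond n d.+1}| + \dim U1 <= #|{: mond n d}| + \dim U2)%N.
Proof.
case: hJ => [hfs [h0 [hD [hZ [hX hH]]]]].
pose f := linfun (@phi k n d).
have fE : forall v, f v = phi v by move=> v; rewrite lfunE.
have hinj : lker f == 0%VS by apply/lker0P => u v; rewrite !fE; apply: phi_inj.
pose A := (f @: fullv)%VS.
have dimA : \dim A = #|{: mond n d}| by rewrite limg_dim_eq ?dimF // (eqP hinj) capv0.
have dim1 : \dim (f @: U1) = \dim U1 by rewrite limg_dim_eq // (eqP hinj) capv0.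
have hfull : (fullv <= A + U2)%VS.
  apply/subvP => w _; rewrite (ffun_delta w); apply: memv_suml => b _; apply: memvZ.
  case: (posnP (tnth (mon_of b) ord_max)) => hb.
    apply: (subvP (addvSr A U2)); apply/h2; rewrite emb_delta.
    by apply: (htopD d.+1) => //; rewrite mdeg_mon_of.
  have hdg : mdeg (mdec (mon_of b) ord_max) = d.
    by have := mdeg_inc (mdec (mon_of b) ord_max) ord_max; rewrite incK // mdeg_mon_of => -[].
  have [a ha] := mon_of_ex hdg.
  apply: (subvP (addvSl A U2)).
  have hb' : mon_of b = inc (mon_of a) ord_max by rewrite ha incK.
  rewrite -(phi_delta k hb').
  by rewrite -fE; apply: memv_img; apply: memvf.
have himg : (f @: U1 <= A :&: U2)%VS.
  apply/subvP => w /memv_imgP [v hv ->]; rewrite memv_cap; apply/andP; split.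
    by apply: memv_img; apply: memvf.
  by apply/h2; rewrite fE emb_phi; apply: hX; apply/h1.
have hle1 : (#|{: mond n d.+1}| <= \dim (A + U2))%N.
  by rewrite -[X in (X <= _)%N](dimF k); exact: dimvS hfull.
have := dimvS himg; rewrite dim1 => hle2.
rewrite -dimA -dimv_sum_cap; exact: leq_add hle1 hle2.
Qed.

Lemma arith_step (X Y u1 u2 : nat) :
  (Y + u1 <= X + u2 -> u1 <= X -> u2 <= Y -> Y - u2 <= X - u1)%N.
Proof. lia. Qed.

Lemma stabilize (f : nat -> nat) m :
  (forall d, (m <= d)%N -> (f d.+1 <= f d)%N) ->
  exists d0, forall d, (d0 <= d)%N -> f d = f d0.
Proof.
move=> hmon.
have mono : forall a b, (m <= a)%N -> (a <= b)%N -> (f b <= f a)%N.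
  move=> a b ha /subnKC <-; elim: (b - a)%N => [|t IH]; first by rewrite addn0.
  by rewrite addnS; apply: leq_trans IH; apply: hmon; lia.
suff: forall N a, (m <= a)%N -> (f a <= N)%N -> exists d0, forall d, (d0 <= d)%N -> f d = f d0.
  by move=> /(_ (f m) m (leqnn m) (leqnn _)).
elim=> [|N IH] a ha hN.
  exists a => d hd; have := mono a d ha hd; lia.
case: (classic (forall d, (a <= d)%N -> f d = f a)) => [h|]; first by exists a.
move=> hn; have [d hd] := not_all_ex_not _ _ hn; have [had hne] := imply_to_and _ _ hd.
apply: (IH d); first lia.
have := mono a d ha had; lia.
Qed.

Unset Implicit Arguments.
Theorem mainTheorem13 (k : closedFieldType) (hchar : [pchar k] =i pred0)
  (n : nat) (hn : (1 <= n)%N) (J : spoly k n -> Prop) (hJ : homog_ideal J)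
  (m : nat) (hm : (0 < m)%N)
  (hJm_nz : exists f, J f /\ homog m f /\ exists a, f a != 0)
  (hseg : exists l : nat, forall f : spoly k n, finsupp f -> homog m f ->
            (J f <-> forall a, f a != 0 -> in_init_seg m l a))
  (hlow : exists m' : nat, (m' < m)%N /\
            exists f, J f /\ homog m' f /\ exists a, f a != 0) :
  exists P : {poly rat}, hilb_poly_is J P /\ (size P <= 1)%N.
Proof.
have hX : forall i f, J f -> J (mulx i f) by case: hJ => [_ [_ [_ [_ [hX _]]]]].
have htop := top_m hJ hseg hlow.
have htopD := top_D hX htop.
have Vsig : forall d, {U : {vspace {ffun mond n d -> k^o}} | forall v, v \in U <-> J (emb v)}.
  by move=> d; apply: constructive_indefinite_description; exact: Vex.
pose c d := (#|{: mond n d}| - \dim (sval (Vsig d)))%N.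
have hmon : forall d, (m <= d)%N -> (c d.+1 <= c d)%N.
  move=> d hd; rewrite /c; apply: arith_step.
  - by apply: (step hJ htopD) => //; [lia | apply: (svalP (Vsig d)) | apply: (svalP (Vsig d.+1))].
  - by rewrite -(dimF k); apply: dimvS; apply: subvf.
  - by rewrite -(dimF k); apply: dimvS; apply: subvf.
have [d0 hd0] := stabilize hmon.
exists ((c d0)%:R)%:P; split; last exact: size_polyC_leq1.
exists d0 => d hd; exists (c d); split.
  by exists (sval (Vsig d)); split; [apply: (svalP (Vsig d)) | rewrite /c].
by rewrite hornerC hd0.
Qed.
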